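(* Let $n\ge 3$ be odd and let $C$ be a Greene–Kleitman chain in $Q_{n-2}$ with $|C|=1$. Put $L:=\ell( *C* )$ and $F:=f( *C* )$ (chains in $Q_n$). Then the bottom end of $L$ is adjacent in $Q_n$ to the top end of $F$, and the chains $*L*$ and $f( *F* )$ are connected at their bottom ends in $Q_{n+2}$. Specifically, if $C=u*v$ with $u,v\in D$, then $L=*\,u\,0\,v\,1$, $*L*=*\,*\,u\,0\,v\,1\,*$, $F=0\,u\,1\,v\,*$, and $f( *F* )=0\,0\,u\,1\,v\,1\,*$; i.e., $L$ and $F$ differ in exactly three positions, and $*L*$ and $f( *F* )$ differ in exactly three positions.
   Context: $Q_n$ is the hypercube on $\{0,1\}^n$. Let $D$ be the set of bitstrings (including the empty string) with equally many $0$s and $1$s such that every prefix has at least as many $0$s as $1$s. A Greene–Kleitman chain in $Q_n$ is a string of length $n$ over $\{0,1,*\}$ of the form $u_0*u_1*\cdots*u_{h-1}*u_h$ with all $u_j\in D$, representing the path whose vertices are obtained by replacing the $*$s by $i$ ones followed by $h-i$ zeros; $|C|=h$ is its number of $*$s. Its bottom end is obtained by replacing all $*$s by $0$, its top end by replacing all $*$s by $1$. For a string $C$ over $\{0,1,*\}$ with at least two $*$s, $f(C)$ (resp. $\ell(C)$) is obtained by replacing the first two (resp. last two) $*$s by $0$ and $1$, respectively. Juxtaposition denotes concatenation. Two chains are connected at their bottom ends if their bottom ends differ in exactly one position. *)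

(* Defs.v *)
From mathcomp Require Import all_boot.
Set Implicit Arguments. Unset Strict Implicit. Unset Printing Implicit Defensive.

Definition sym := option bool.
Definition s0 : sym := Some false.
Definition s1 : sym := Some true.
Definition Star : sym := None.

Definition bitstr (u : seq sym) : bool := all (fun x => x != Star) u.

Definition inD (u : seq sym) : bool :=
  [&& bitstr u, count_mem s0 u == count_mem s1 u &
      all (fun i => count_mem s1 (take i u) <= count_mem s0 (take i u))
          (iota 0 (size u).+1)].

Fixpoint glue (us : seq (seq sym)) : seq sym :=
  match us with
  | [::] => [::]
  | [:: u] => u
  | u :: us' => u ++ Star :: glue us'
  end.

Definition GK_chain (n : nat) (C : seq sym) : Prop :=
  size C = n /\ exists us : seq (seq sym), us != [::] /\ all inD us /\ C = glue us.

Definition nstars (C : seq sym) : nat := count_mem Star C.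

Definition bottom (C : seq sym) : seq sym := map (fun x => if x is None then s0 else x) C.
Definition top (C : seq sym) : seq sym := map (fun x => if x is None then s1 else x) C.

Fixpoint repl_first (b : bool) (s : seq sym) : seq sym :=
  match s with
  | [::] => [::]
  | x :: s' => if x == Star then Some b :: s' else x :: repl_first b s'
  end.

Definition fC (C : seq sym) : seq sym := repl_first true (repl_first false C).
(* l(C): last two stars replaced by 0 and 1 respectively *)
Definition lC (C : seq sym) : seq sym := rev (repl_first false (repl_first true (rev C))).

Definition differ_in (k : nat) (s t : seq sym) : Prop :=
  size s = size t /\ count (fun p => p.1 != p.2) (zip s t) = k.

Definition adjacent (x y : seq sym) : Prop := bitstr x /\ bitstr y /\ differ_in 1 x y.

Definition connected_bottom (A B : seq sym) : Prop := differ_in 1 (bottom A) (bottom B).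

(* Main.v *)
Require Import Defs.
From mathcomp Require Import all_boot.

Lemma bitstr_count s : bitstr s = (count_mem Star s == 0).
Proof. by elim: s => [|x s IH] //=; rewrite IH; case: x. Qed.

Lemma decomp C : nstars C = 1 ->
  exists u v, [/\ bitstr u, bitstr v & C = u ++ Star :: v].
Proof.
elim: C => [|x C IH] //=; rewrite /nstars /=.
case: x => [b|] /=.
- move=> H; have [u [v [bu bv ->]]] := IH H.
  by exists (Some b :: u), v.
- move=> [] H; rewrite add0n in H; exists [::], C; split => //; by rewrite bitstr_count H.
Qed.

Lemma repl_cat b u s : bitstr u -> repl_first b (u ++ s) = u ++ repl_first b s.
Proof. by elim: u => [|x u IH] //=; case: x => //= a /IH ->. Qed.

Lemma bitstr_rev u : bitstr u -> bitstr (rev u).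
Proof. by rewrite /bitstr all_rev. Qed.

Lemma bottom_bit u : bitstr u -> bottom u = u.
Proof. by elim: u => [|x u IH] //=; case: x => //= a /IH; rewrite /bottom => ->. Qed.
Lemma top_bit u : bitstr u -> top u = u.
Proof. by elim: u => [|x u IH] //=; case: x => //= a /IH; rewrite /top => ->. Qed.

Lemma bottom_cat s t : bottom (s ++ t) = bottom s ++ bottom t.
Proof. exact: map_cat. Qed.
Lemma bottom_cons x s : bottom (x :: s) = (if x is None then s0 else x) :: bottom s.
Proof. by []. Qed.
Lemma top_cat s t : top (s ++ t) = top s ++ top t.
Proof. exact: map_cat. Qed.
Lemma top_cons x s : top (x :: s) = (if x is None then s1 else x) :: top s.
Proof. by []. Qed.
Lemma bitstr_cat s t : bitstr (s ++ t) = bitstr s && bitstr t.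
Proof. exact: all_cat. Qed.

Lemma cnt_same (T : eqType) (u : seq T) : count (fun p : T * T => p.1 != p.2) (zip u u) = 0.
Proof. by elim: u => //= x u ->; rewrite eqxx. Qed.

Lemma cnt_cat (T : eqType) (u s t : seq T) : size s = size t ->
  count (fun p : T * T => p.1 != p.2) (zip (u ++ s) (u ++ t)) =
  count (fun p : T * T => p.1 != p.2) (zip s t).
Proof. by move=> H; rewrite zip_cat // count_cat cnt_same. Qed.

Lemma core u v : bitstr u -> bitstr v ->
  let C := u ++ Star :: v in
  [/\ lC (Star :: rcons C Star) = Star :: u ++ s0 :: v ++ [:: s1],
      Star :: rcons (lC (Star :: rcons C Star)) Star = [:: Star, Star & u] ++ s0 :: v ++ [:: s1; Star],
      fC (Star :: rcons C Star) = s0 :: u ++ s1 :: v ++ [:: Star] &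
      fC (Star :: rcons (fC (Star :: rcons C Star)) Star) = [:: s0, s0 & u] ++ s1 :: v ++ [:: s1; Star]].
Proof.
move=> bu bv C.
have EL : lC (Star :: rcons C Star) = Star :: u ++ s0 :: v ++ [:: s1].
  rewrite /lC /C rev_cons rev_rcons rev_cat /= rev_cons.
  rewrite rev_cons -!cats1 -!catA /= repl_cat ?bitstr_rev //=.
  rewrite rev_cat /= rev_cons rev_cat revK /= revK -!cats1 -!catA /=. done.
have EF : fC (Star :: rcons C Star) = s0 :: u ++ s1 :: v ++ [:: Star].
  by rewrite /fC /C /= -cats1 -catA repl_cat //= repl_cat.
split => //. by rewrite EL /= rcons_cat rcons_cons rcons_cat.
rewrite EF /fC /= rcons_cat /= rcons_cat /= repl_cat //= repl_cat //=. Show.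
Qed.

Theorem lemma22 (n : nat) (C : seq sym) :
  3 <= n -> odd n -> GK_chain (n - 2) C -> nstars C = 1 ->
  let L := lC (Star :: rcons C Star) in
  let F := fC (Star :: rcons C Star) in
  [/\ adjacent (bottom L) (top F),
      connected_bottom (Star :: rcons L Star) (fC (Star :: rcons F Star)),
      differ_in 3 L F,
      differ_in 3 (Star :: rcons L Star) (fC (Star :: rcons F Star)) &
      forall u v : seq sym, inD u -> inD v -> C = u ++ Star :: v ->
        [/\ L = Star :: u ++ s0 :: v ++ [:: s1],
            Star :: rcons L Star = [:: Star, Star & u] ++ s0 :: v ++ [:: s1; Star],
            F = s0 :: u ++ s1 :: v ++ [:: Star] &
            fC (Star :: rcons F Star) = [:: s0, s0 & u] ++ s1 :: v ++ [:: s1; Star]]].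
Proof.
move=> _ _ _ /decomp [u [v [bu bv EC]]] L F.
have [E1 E2 E3 E4] := core u v bu bv.
rewrite -EC in E1 E2 E3 E4.
rewrite /L /F E2 E4 E1 E3.
split.
- rewrite /adjacent /differ_in !(bottom_cat, bottom_cons, top_cat, top_cons) /=
    !(bottom_bit u bu, bottom_bit v bv, top_bit u bu, top_bit v bv).
  rewrite !bitstr_cat /= !bitstr_cat bu bv /=; split => //; split => //.
  split; first by rewrite !size_cat /= !size_cat.
  rewrite (cnt_cat _ u); last by rewrite /= !size_cat.
  by rewrite /= (cnt_cat _ v).
- rewrite /connected_bottom /differ_in !(bottom_cat, bottom_cons) /=
    !(bottom_bit u bu, bottom_bit v bv).
  split; first by rewrite !size_cat /= !size_cat.
  rewrite (cnt_cat _ u); last by rewrite /= !size_cat.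
  by rewrite /= (cnt_cat _ v).
- rewrite /differ_in /= !size_cat /=; split; first by rewrite !size_cat.
  rewrite (cnt_cat _ u); last by rewrite /= !size_cat.
  by rewrite /= (cnt_cat _ v).
- rewrite /differ_in /= !size_cat /=; split; first by rewrite !size_cat.
  rewrite (cnt_cat _ u); last by rewrite /= !size_cat.
  by rewrite /= (cnt_cat _ v).
- move=> u' v' Du Dv EC'.
  have bu' : bitstr u' by case/and3P: Du.
  have bv' : bitstr v' by case/and3P: Dv.
  have [F1 F2 F3 F4] := core u' v' bu' bv'.
  by rewrite -EC' in F1 F2 F3 F4; rewrite -E1 -E2 -E3 -E4.
Qed.
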